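(* If the toric algebra $A_{\mathscr{E}}$ is consistent, then every arrow of $Q$ lies on some anticanonical cycle, and hence appears in a term of the superpotential $W=\sum_{p\text{ anticanonical}}p$.
   Context: Let $\mathbb{k}$ be an algebraically closed field and $X=\operatorname{Spec}R$ a normal affine toric variety of dimension $n$ with a torus-fixed point, $R=\mathbb{k}[\sigma^\vee\cap M]$, $\sigma\subset N\otimes\mathbb{R}$ strongly convex rational polyhedral. Let $\sigma(1)$ be the rays, $d=|\sigma(1)|$, $v_\rho$ primitive generators, $D_\rho$ toric prime divisors, torus-invariant divisors identified with $\mathbb{Z}^d$, $\deg:\mathbb{Z}^d\to\operatorname{Cl}(X)$ the class map. Cox ring $\mathbb{k}[x_\rho]$, $x^D=\prod x_\rho^{D_\rho}$. Assume $X$ is Gorenstein: $(1,\dots,1)\in\mathbb{Z}^d$ lies in the image of $M$ under $u\mapsto\sum\langle u,v_\rho\rangle D_\rho$. Let $\mathscr{E}=(E_0=\mathcal{O}_X,E_1,\dots,E_r)$ be pairwise distinct rank one reflexive sheaves, $E_i=\mathcal{O}_X(D_i')$, and $Q$ its quiver of sections: vertices $0,\dots,r$; an arrow $a:i\to j$ with label $\operatorname{div}(a)\in\mathbb{N}^d$ for each irreducible $T_M$-invariant section $x^{\operatorname{div}(a)}$ of $\operatorname{Hom}(E_i,E_j)\cong H^0(\mathcal{O}_X(D_j'-D_i'))$ (irreducible: not in the image of multiplication through any $E_k$, $k\neq i,j$). Paths compose right to left; $\operatorname{div}(p)$ is the sum of labels of arrows of $p$. $J_{\mathscr{E}}$ is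 generated by $p^+-p^-$ over pairs of paths with equal head, tail and label; $A_{\mathscr{E}}=\mathbb{k}Q/J_{\mathscr{E}}$. A cycle $p$ is anticanonical if $x^{\operatorname{div}(p)}=\prod_\rho x_\rho$; $W\in\mathbb{k}Q/[\mathbb{k}Q,\mathbb{k}Q]$ is the sum of all anticanonical cycles. For a path $q$, $\partial_qW$ is the sum of all paths $p$ such that $pq$ is an anticanonical cycle. $\mathscr{P}$ is the set of paths $q$ with $\partial_qW$ a sum of precisely two paths sharing neither initial nor final arrow; $J_W$ is generated by $p^+-p^-$ whenever $\partial_qW=p^++p^-$, $q\in\mathscr{P}$. $A_{\mathscr{E}}$ is consistent if $J_W=J_{\mathscr{E}}$. *)

(* Defs.v *)
From HB Require Import structures.
From mathcomp Require Import all_boot all_order all_algebra.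
From Stdlib Require List.
Set Implicit Arguments. Unset Strict Implicit. Unset Printing Implicit Defensive.
Import Order.TTheory GRing.Theory Num.Theory.

Section LabelledQuiver.
Variables (V A : eqType) (isArrow : A -> Prop) (tl hd : A -> V) (d : nat)
          (lab : A -> {ffun 'I_d -> nat}).

(* A path is a tail vertex together with its arrows listed in the order in
   which they are traversed (the first one leaves the tail). *)
Definition qpath := (V * seq A)%type.

Fixpoint chain (t : V) (s : seq A) : bool :=
  if s is a :: s' then (tl a == t) && chain (hd a) s' else true.

Definition ptail (p : qpath) : V := p.1.
Definition phead (p : qpath) : V := last p.1 (map hd p.2).
Definition pvalid (p : qpath) : Prop :=
  (forall a, a \in p.2 -> isArrow a) /\ chain p.1 p.2.

(* composition p q : first q, then p  (paths compose right to left) *)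
Definition pcomp (p q : qpath) : qpath := (q.1, q.2 ++ p.2).

Definition plab (p : qpath) (rho : 'I_d) : nat := \sum_(a <- p.2) lab a rho.

(* anticanonical cycle: nontrivial closed path with x^{div p} = prod x_rho *)
Definition anticanonical (c : qpath) : Prop :=
  pvalid c /\ c.2 <> [::] /\ phead c = ptail c /\ forall rho, plab c rho = 1%N.

(* p occurs in d_q W : p q is an anticanonical cycle *)
Definition in_dW (q p : qpath) : Prop :=
  pvalid q /\ pvalid p /\ ptail p = phead q /\ anticanonical (pcomp p q).

Definition share_first (p1 p2 : qpath) : Prop :=
  exists a, ohead p1.2 = Some a /\ ohead p2.2 = Some a.
Definition share_last (p1 p2 : qpath) : Prop :=
  exists a, ohead (rev p1.2) = Some a /\ ohead (rev p2.2) = Some a.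

(* q \in P with d_q W = p1 + p2 *)
Definition dW_two (q p1 p2 : qpath) : Prop :=
  p1 <> p2 /\ (forall p, in_dW q p <-> p = p1 \/ p = p2) /\
  ~ share_first p1 p2 /\ ~ share_last p1 p2.

Definition relW (p1 p2 : qpath) : Prop := exists q, dW_two q p1 p2.
Definition relE (p1 p2 : qpath) : Prop :=
  pvalid p1 /\ pvalid p2 /\ ptail p1 = ptail p2 /\ phead p1 = phead p2 /\
  forall rho, plab p1 rho = plab p2 rho.

Variable k : fieldType.

(* elements of kQ are coefficient functions on paths; the two-sided ideal
   generated by binomials p1 - p2 (with B p1 p2) is the k-span of the
   elements u p1 w - u p2 w with u, w paths composable with p1 (and p2). *)
Record gen := Gen { gc : k; gu : qpath; gp1 : qpath; gp2 : qpath; gw : qpath }.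

Definition gen_ok (B : qpath -> qpath -> Prop) (g : gen) : Prop :=
  B (gp1 g) (gp2 g) /\ pvalid (gu g) /\ pvalid (gw g) /\
  phead (gw g) = ptail (gp1 g) /\ phead (gp1 g) = ptail (gu g).

Definition gen_coef (L : seq gen) (x : qpath) : k :=
  \sum_(g <- L)
    ((if pcomp (gu g) (pcomp (gp1 g) (gw g)) == x then gc g else 0) -
     (if pcomp (gu g) (pcomp (gp2 g) (gw g)) == x then gc g else 0))%R.

Definition in_ideal (B : qpath -> qpath -> Prop) (f : qpath -> k) : Prop :=
  exists L : seq gen, List.Forall (gen_ok B) L /\ forall x, f x = gen_coef L x.

Definition consistent : Prop :=
  forall f : qpath -> k, in_ideal relW f <-> in_ideal relE f.

End LabelledQuiver.

Section Toric.
Local Open Scope ring_scope.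
Variables (n d : nat) (v : 'I_d -> 'I_n -> int).

Definition pairing (u : 'I_n -> int) (rho : 'I_d) : int :=
  (\sum_(i < n) u i * v rho i)%R.

(* D is the divisor of a character u in M, i.e. deg D = 0 in Cl(X) *)
Definition principal (D : 'I_d -> int) : Prop :=
  exists u : 'I_n -> int, forall rho, D rho = pairing u rho.

Definition primitive_rays : Prop :=
  forall (rho : 'I_d) (m : nat), (forall i, (m%:Z %| v rho i)%Z) -> m = 1%N.

Definition strongly_convex : Prop :=
  forall lam : 'I_d -> rat, (forall rho, 0 <= lam rho)%R ->
    (forall i, \sum_(rho < d) lam rho * (v rho i)%:~R = 0)%R ->
    forall rho, lam rho = 0%R.

(* each v_rho spans an extremal ray, i.e. sigma(1) = {rays of v_rho} *)
Definition rays_extremal : Prop :=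
  forall rho : 'I_d, ~ exists lam : 'I_d -> rat,
    (forall r, 0 <= lam r)%R /\
    forall i, (v rho i)%:~R = (\sum_(r < d | r != rho) lam r * (v r i)%:~R)%R.

Definition full_dimensional : Prop :=
  forall u : 'I_n -> rat,
    (forall rho, \sum_(i < n) u i * (v rho i)%:~R = 0)%R -> forall i, u i = 0%R.

Definition gorenstein : Prop :=
  exists u : 'I_n -> int, forall rho, pairing u rho = 1%R.

Definition cone_data : Prop :=
  [/\ primitive_rays, strongly_convex, rays_extremal & full_dimensional].

(* the collection E_i = O_X(D'_i), i = 0..r *)
Variables (r : nat) (D' : 'I_r.+1 -> 'I_d -> int).

Definition collection_ok : Prop :=
  principal (D' ord0) /\
  forall i j : 'I_r.+1, i <> j -> ~ principal (fun rho => D' j rho - D' i rho)%R.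

Definition qs_arrow := ('I_r.+1 * 'I_r.+1 * {ffun 'I_d -> nat})%type.
Definition qs_tl (a : qs_arrow) : 'I_r.+1 := a.1.1.
Definition qs_hd (a : qs_arrow) : 'I_r.+1 := a.1.2.
Definition qs_lab (a : qs_arrow) : {ffun 'I_d -> nat} := a.2.

(* x^a is a T_M-invariant section of Hom(E_i,E_j) = H^0(O(D'_j - D'_i)) *)
Definition is_section (i j : 'I_r.+1) (a : 'I_d -> nat) : Prop :=
  principal (fun rho => (a rho)%:Z - (D' j rho - D' i rho))%R.

Definition is_qs_arrow (a : qs_arrow) : Prop :=
  let: (i, j, l) := a in
  is_section i j l /\ l <> [ffun _ => 0%N] /\
  ~ exists (m : 'I_r.+1) (b c : 'I_d -> nat),
      [/\ m <> i, m <> j, is_section i m b, is_section m j c &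
          forall rho, l rho = (b rho + c rho)%N].

End Toric.

(* Main.v *)
Require Import Defs.
From HB Require Import structures.
From mathcomp Require Import all_boot all_order all_algebra.
From mathcomp Require Import zify.
From Stdlib Require Import Classical.
Set Implicit Arguments. Unset Strict Implicit. Unset Printing Implicit Defensive.
Import Order.TTheory GRing.Theory Num.Theory.

Section Gen.
Variables (V A : eqType) (isArrow : A -> Prop) (tl hd : A -> V) (d : nat)
          (lab : A -> {ffun 'I_d -> nat}).

Lemma chain_cat t s1 s2 : chain tl hd t (s1 ++ s2) =
  chain tl hd t s1 && chain tl hd (last t (map hd s1)) s2.
Proof. elim: s1 t => [|a s IH] t //=. by rewrite IH andbA. Qed.

Lemma pvalid_comp (p q : qpath V A) : pvalid isArrow tl hd p -> pvalid isArrow tl hd q ->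
  phead hd q = ptail p -> pvalid isArrow tl hd (Defs.pcomp p q).
Proof.
case: p => tp sp; case: q => tq sq [Hp Cp] [Hq Cq]; rewrite /phead /ptail /= => E.
split => /=.
  by move=> a; rewrite mem_cat => /orP [] ?; [apply: Hq | apply: Hp].
by rewrite chain_cat Cq E.
Qed.

Lemma phead_comp (p q : qpath V A) : phead hd q = ptail p ->
  phead hd (Defs.pcomp p q) = phead hd p.
Proof.
case: p => tp sp; case: q => tq sq; rewrite /phead /ptail /= => E.
by rewrite map_cat last_cat E.
Qed.

Lemma plab_comp (p q : qpath V A) rho :
  plab lab (Defs.pcomp p q) rho = (plab lab q rho + plab lab p rho)%N.
Proof. by rewrite /plab /= big_cat. Qed.

Lemma sum_gen (k : fieldType) (L : seq (gen V A k)) (X : seq (qpath V A))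
  (w : qpath V A -> k) : uniq X ->
  List.Forall (fun g => Defs.pcomp (gu g) (Defs.pcomp (gp1 g) (gw g)) \in X /\
                       Defs.pcomp (gu g) (Defs.pcomp (gp2 g) (gw g)) \in X) L ->
  (\sum_(x <- X) gen_coef L x * w x =
   \sum_(g <- L) gc g * (w (Defs.pcomp (gu g) (Defs.pcomp (gp1 g) (gw g))) -
                         w (Defs.pcomp (gu g) (Defs.pcomp (gp2 g) (gw g)))))%R.
Proof.
move=> uX; elim: L => [|g L IH] HL.
  by rewrite big_nil /gen_coef big1 // => x _; rewrite big_nil mul0r.
inversion HL as [|? ? [H1 H2] HL']; subst.
rewrite big_cons -IH //.
rewrite /gen_coef.
under eq_bigr => x _ do rewrite big_cons mulrDl.
rewrite big_split /=; congr (_ + _)%R.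
under eq_bigr => x _ do rewrite mulrBl.
rewrite sumrB mulrBr.
have E : forall y, y \in X -> (\sum_(x <- X) (if y == x then gc g else 0) * w x = gc g * w y)%R.
  move=> y yX; rewrite (bigD1_seq y) //= eqxx big1 ?addr0 // => x.
  by rewrite eq_sym => /negbTE ->; rewrite mul0r.
by rewrite !E.
Qed.
End Gen.

Section Tor.
Variables (n d : nat) (v : 'I_d -> 'I_n -> int) (r : nat) (D' : 'I_r.+1 -> 'I_d -> int).

Notation isA := (@is_qs_arrow n d v r D').
Notation tlA := (@qs_tl d r).
Notation hdA := (@qs_hd d r).
Notation labA := (@qs_lab d r).

Lemma pairingN (u : 'I_n -> int) rho : pairing v (fun i => - u i)%R rho = (- pairing v u rho)%R.
Proof. by rewrite /pairing -sumrN; apply: eq_bigr => i _; rewrite mulNr. Qed.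

Lemma pairing_lin (c : int) (u0 u1 : 'I_n -> int) rho :
  pairing v (fun i => c * u0 i - u1 i)%R rho = (c * pairing v u0 rho - pairing v u1 rho)%R.
Proof.
rewrite /pairing mulr_sumr -sumrB; apply: eq_bigr => i _.
by rewrite mulrBl mulrA.
Qed.

Lemma sec_zero i j : collection_ok v D' -> is_section v D' i j (fun _ => 0%N) -> i = j.
Proof.
move=> [_ Hc] [u Hu]; apply: NNPP => Hij; apply: (Hc i j Hij).
exists (fun k => - u k)%R => rho; rewrite pairingN -Hu /=.
by rewrite sub0r opprK.
Qed.

Lemma decomp N : collection_ok v D' -> forall i j (D : 'I_d -> nat),
  (\sum_rho D rho <= N)%N -> is_section v D' i j D ->
  exists p, pvalid isA tlA hdA p /\ ptail p = i /\ phead hdA p = j /\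
            forall rho, plab labA p rho = D rho.
Proof.
move=> Hok; elim: N => [|N IH] i j D HN Hs.
  have D0 : forall rho, D rho = 0%N.
    by move=> rho; move: HN; rewrite (bigD1 rho) //=; lia.
  have Hs0 : is_section v D' i j (fun _ => 0%N).
    by case: Hs => u Hu; exists u => rho; rewrite -Hu D0.
  have <- := sec_zero Hok Hs0.
  exists (i, [::]); split; first by split.
  by split => //; split => // rho; rewrite /plab big_nil D0.
case: (boolP [forall rho, D rho == 0%N]) => [/forallP D0 | ].
  have Hs0 : is_section v D' i j (fun _ => 0%N).
    by case: Hs => u Hu; exists u => rho; rewrite -Hu (eqP (D0 rho)).
  have <- := sec_zero Hok Hs0.
  exists (i, [::]); split; first by split.
  by split => //; split => // rho; rewrite /plab big_nil (eqP (D0 rho)).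
move=> /forallPn [rho0 Hrho0].
have Hne : [ffun rho => D rho] <> [ffun _ => 0%N].
  by move/ffunP/(_ rho0); rewrite !ffunE; apply/eqP.
case: (classic (isA (i, j, [ffun rho => D rho]))) => Harr.
  exists (i, [:: (i, j, [ffun rho => D rho])]); split.
    split => /=; last by rewrite /qs_tl eqxx.
    by move=> a; rewrite inE => /eqP ->.
  split => //; split => // rho.
  by rewrite /plab big_cons big_nil /qs_lab /= ffunE addn0.
have : exists (m : 'I_r.+1) (b c : 'I_d -> nat),
      [/\ m <> i, m <> j, is_section v D' i m b, is_section v D' m j c &
          forall rho, [ffun rho => D rho] rho = (b rho + c rho)%N].
  apply: NNPP => H; apply: Harr; split; last split => //.
  - by case: Hs => u Hu; exists u => rho; rewrite -Hu ffunE.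
move=> [m [b [c [Hmi Hmj Hb Hc Hbc]]]].
have Hbc' : forall rho, D rho = (b rho + c rho)%N by move=> rho; rewrite -Hbc ffunE.
have bnz : exists rho, b rho != 0%N.
  apply: NNPP => H; apply: Hmi; apply/esym/(sec_zero Hok).
  case: Hb => u Hu; exists u => rho; rewrite -Hu.
  by case: (b rho =P 0%N) => [->|/eqP ?] //; exfalso; apply: H; exists rho.
have cnz : exists rho, c rho != 0%N.
  apply: NNPP => H; apply: Hmj; apply: (sec_zero Hok).
  case: Hc => u Hu; exists u => rho; rewrite -Hu.
  by case: (c rho =P 0%N) => [->|/eqP ?] //; exfalso; apply: H; exists rho.
have sumD : (\sum_rho D rho = \sum_rho b rho + \sum_rho c rho)%N.
  by rewrite -big_split; apply: eq_bigr => rho _; rewrite Hbc'.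
have posb : (0 < \sum_rho b rho)%N.
  case: bnz => rho Hr; rewrite (bigD1 rho) //=; by rewrite ltn_addr // lt0n.
have posc : (0 < \sum_rho c rho)%N.
  case: cnz => rho Hr; rewrite (bigD1 rho) //=; by rewrite ltn_addr // lt0n.
have [pb [Vb [Tb [Hb' Lb]]]] : exists p, pvalid isA tlA hdA p /\ ptail p = i /\ phead hdA p = m /\
            forall rho, plab labA p rho = b rho.
  apply: IH Hb; move: HN; rewrite sumD; lia.
have [pc [Vc [Tc [Hc' Lc]]]] : exists p, pvalid isA tlA hdA p /\ ptail p = m /\ phead hdA p = j /\
            forall rho, plab labA p rho = c rho.
  apply: IH Hc; move: HN; rewrite sumD; lia.
exists (Defs.pcomp pc pb); split; first by apply: pvalid_comp => //; rewrite Hb' Tc.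
split; first by [].
split; first by rewrite phead_comp // Hb' Tc.
by move=> rho; rewrite plab_comp Lb Lc Hbc'.
Qed.
End Tor.

Section G2.
Variables (V A : eqType) (k : fieldType).
Definition P1 (g : gen V A k) := Defs.pcomp (gu g) (Defs.pcomp (gp1 g) (gw g)).
Definition P2 (g : gen V A k) := Defs.pcomp (gu g) (Defs.pcomp (gp2 g) (gw g)).
Definition genpaths (L : seq (gen V A k)) := flatten (map (fun g => [:: P1 g; P2 g]) L).

Lemma genpaths_mem L s1 s2 :
  List.Forall (fun g => P1 g \in s1 ++ genpaths L ++ s2 /\ P2 g \in s1 ++ genpaths L ++ s2) L.
Proof.
elim: L s1 => [|g L IH] s1 /=; first by constructor.
constructor.
  by rewrite !mem_cat !inE !eqxx /= !orbT.
have := IH (s1 ++ [:: P1 g; P2 g]); rewrite -!catA /=.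
by [].
Qed.

Lemma sum_zero (Q : gen V A k -> Prop) (w : qpath V A -> k) L :
  (forall g, Q g -> w (P1 g) = w (P2 g)) -> List.Forall Q L ->
  (\sum_(g <- L) gc g * (w (P1 g) - w (P2 g)) = 0)%R.
Proof.
move=> H; elim: L => [|g L IH] HL; first by rewrite big_nil.
inversion HL; subst; rewrite big_cons IH // H // subrr mulr0 add0r //.
Qed.
End G2.

Theorem corollary3p7 (kk : closedFieldType) (n d : nat)
  (v : 'I_d -> 'I_n -> int) (r : nat) (D' : 'I_r.+1 -> 'I_d -> int) :
  cone_data v -> gorenstein v -> collection_ok v D' ->
  consistent (@is_qs_arrow n d v r D') (@qs_tl d r) (@qs_hd d r)
    (@qs_lab d r) kk ->
  forall a : qs_arrow d r, is_qs_arrow v D' a ->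
    exists c, anticanonical (@is_qs_arrow n d v r D') (@qs_tl d r)
                (@qs_hd d r) (@qs_lab d r) c /\ a \in c.2.
Proof.
move=> _ [u0 Hu0] Hok Hcons a Harr.
apply: NNPP => Hno.
have Hnotin : forall c, anticanonical (@is_qs_arrow n d v r D') (@qs_tl d r)
                (@qs_hd d r) (@qs_lab d r) c -> a \notin c.2.
  by move=> c Hc; apply/negP => Ha; apply: Hno; exists c.
move: Harr; case Ea: a => [[i j] l] [Hsec [Hnz Hirr]].
have [rho0 Hrho0] : exists rho, l rho != 0%N.
  apply: NNPP => H; apply: Hnz; apply/ffunP => rho; rewrite ffunE.
  by apply/eqP; apply: NNPP => H'; apply: H; exists rho; apply/negP.
have Hs1 : is_section v D' i i (fun _ => 1%N).
  by exists u0 => rho; rewrite Hu0 subrr subr0.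
have [c [Vc [Tc [Hc Lc]]]] := decomp Hok (leqnn _) Hs1.
have Acc : anticanonical (@is_qs_arrow n d v r D') (@qs_tl d r)
                (@qs_hd d r) (@qs_lab d r) c.
  split => //; split.
    move=> E; have := Lc rho0; rewrite /plab E big_nil //.
  by rewrite Hc Tc.
have Hac := Hnotin c Acc.
have Pow : forall t, exists p, pvalid (@is_qs_arrow n d v r D') (@qs_tl d r) (@qs_hd d r) p /\
     ptail p = i /\ phead (@qs_hd d r) p = i /\ (forall rho, plab (@qs_lab d r) p rho = t) /\
     a \notin p.2.
  elim => [|t [p [Vp [Tp [Hp [Lp Ap]]]]]].
    exists (i, [::]); split; first by split.
    by split => //; split => //; split => // rho; rewrite /plab big_nil.
  exists (Defs.pcomp c p); split; first by apply: pvalid_comp => //; rewrite Hp Tc.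
  split; first by [].
  split; first by rewrite phead_comp // Hp Tc.
  split; first by move=> rho; rewrite plab_comp Lp Lc addn1.
  by rewrite /= mem_cat negb_or Ap.
set t := (\sum_(rho < d) l rho)%N.
have Hlt : forall rho, (l rho <= t)%N by move=> rho; rewrite /t (bigD1 rho) //= leq_addr.
have Hsec2 : is_section v D' j i (fun rho => t - l rho)%N.
  case: Hsec => u1 Hu1.
  exists (fun k => t%:Z * u0 k - u1 k)%R => rho.
  rewrite pairing_lin Hu0 -Hu1 -subzn ?Hlt // mulr1; lia.
have [p [Vp [Tp [Hp Lp]]]] := decomp Hok (leqnn _) Hsec2.
set C1 := Defs.pcomp p (i, [:: a]).
have [C2 [V2 [T2 [H2 [L2 A2]]]]] := Pow t.
have Va : pvalid (@is_qs_arrow n d v r D') (@qs_tl d r) (@qs_hd d r) (i, [:: a]).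
  split => /=; first by move=> b; rewrite inE => /eqP ->; rewrite Ea; split => //; split.
  by rewrite Ea /qs_tl /= eqxx.
have Ha : phead (@qs_hd d r) (i, [:: a]) = j by rewrite /phead /= Ea.
have V1 : pvalid (@is_qs_arrow n d v r D') (@qs_tl d r) (@qs_hd d r) C1.
  by apply: pvalid_comp => //; rewrite Ha Tp.
have H1 : phead (@qs_hd d r) C1 = i by rewrite /C1 phead_comp // Ha Tp.
have L1 : forall rho, plab (@qs_lab d r) C1 rho = t.
  move=> rho; rewrite /C1 plab_comp Lp /plab big_cons big_nil Ea /qs_lab /= addn0.
  by rewrite subnKC.
have A1 : a \in C1.2 by rewrite /C1 /= inE eqxx.
set g := Gen (1 : kk)%R (i, [::]) C1 C2 (i, [::]).
have HE : in_ideal (@is_qs_arrow n d v r D') (@qs_tl d r) (@qs_hd d r)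
    (relE (@is_qs_arrow n d v r D') (@qs_tl d r) (@qs_hd d r) (@qs_lab d r))
    (gen_coef [:: g]).
  exists [:: g]; split => //.
  constructor => //.
  split; first by rewrite /g /=; split => //; split => //; split; [rewrite T2 | split; [rewrite H1 H2 | move=> rho; rewrite L1 L2]].
  split; first by split.
  split; first by split.
  by split => //; rewrite H1.
have [L [HL Hf]] := (Hcons (gen_coef [:: g])).2 HE.
pose w := fun x : qpath 'I_r.+1 (qs_arrow d r) => (((a \notin x.2)%:R)%R : kk).
pose X := undup (genpaths (g :: L)).
have uX : uniq X by apply: undup_uniq.
have e1 := sum_gen w uX (L := [:: g]) _.
have e2 := sum_gen w uX (L := L) _.
have F1 : List.Forall (fun g0 => P1 g0 \in X /\ P2 g0 \in X) [:: g].
  constructor => //; rewrite /X !mem_undup /genpaths /= !inE !eqxx /= orbT //.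
have F2 : List.Forall (fun g0 => P1 g0 \in X /\ P2 g0 \in X) L.
  have := genpaths_mem L [:: P1 g; P2 g] [::]; rewrite cats0.
  apply: List.Forall_impl => g0; rewrite /X !mem_undup /genpaths /=.
  by [].
have := e2 F2; have := e1 F1.
rewrite (eq_bigr (fun x => gen_coef L x * w x)%R); last by move=> x _; rewrite Hf.
move=> ->.
rewrite (sum_zero (L := L) (Q := gen_ok (@is_qs_arrow n d v r D') (@qs_tl d r) (@qs_hd d r)
    (relW (@is_qs_arrow n d v r D') (@qs_tl d r) (@qs_hd d r) (@qs_lab d r)))) //; last first.
  move=> g0 [[q [_ [Hiff _]]] _].
  have nin : forall p0, (p0 = gp1 g0 \/ p0 = gp2 g0) -> a \notin p0.2.
    move=> p0 /(Hiff p0).2 [_ [_ [_ Hacc]]].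
    by have := Hnotin _ Hacc; rewrite /= mem_cat negb_or => /andP [].
  rewrite /w /P1 /P2 /= !mem_cat (negbTE (nin _ (or_introl erefl))).
  by rewrite (negbTE (nin _ (or_intror erefl))).
rewrite big_cons big_nil /w /P1 /P2 /g /= inE eqxx !cats0 A2 /=.
rewrite mul1r addr0 sub0r => /eqP; rewrite oppr_eq0 oner_eq0 //.
Qed.
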